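(* Let $p$ be an odd prime, $n\ge 1$, and let $f,g:\mathbb{F}_{p^n}\to\mathbb{F}_{p^n}$ both be planar Dembowski–Ostrom functions. Then $f$ and $g$ are EA-equivalent if and only if $f$ and $g$ are linear equivalent.
   Context: A function $f:\mathbb{F}_{p^n}\to\mathbb{F}_{p^n}$ is planar if for every $a\in\mathbb{F}_{p^n}^*$ the map $x\mapsto f(x+a)-f(x)$ is a bijection of $\mathbb{F}_{p^n}$. A Dembowski–Ostrom (DO) function is one given by a polynomial of the form $\sum_{i,j}a_{ij}x^{p^i+p^j}$ with $a_{ij}\in\mathbb{F}_{p^n}$. A function is affine if it is the sum of a constant and a linearized polynomial $\sum_i c_i x^{p^i}$ over $\mathbb{F}_{p^n}$. Two functions $f,g$ are EA-equivalent if $g=l_1\circ f\circ l_2+l_3$ with $l_1,l_2,l_3$ affine and $l_1,l_2$ permutations of $\mathbb{F}_{p^n}$; they are linear equivalent if $g=l_1\circ f\circ l_2$ with $l_1,l_2$ linearized permutation polynomials (i.e. $\mathbb{F}_p$-linear bijections). *)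

(* Defs.v *)
From HB Require Import structures.
From mathcomp Require Import all_boot all_order all_algebra all_field.
Set Implicit Arguments. Unset Strict Implicit. Unset Printing Implicit Defensive.
Import GRing.Theory.
Local Open Scope ring_scope.

Definition planar (F : finFieldType) (f : F -> F) : Prop :=
  forall a : F, a != 0 -> bijective (fun x => f (x + a) - f x).

Definition DO_fun (p : nat) (F : finFieldType) (f : F -> F) : Prop :=
  exists (N : nat) (a : 'I_N -> 'I_N -> F),
    forall x : F, f x = \sum_(i < N) \sum_(j < N) a i j * x ^+ (p ^ i + p ^ j)%N.

Definition linearized (p : nat) (F : finFieldType) (l : F -> F) : Prop :=
  exists (N : nat) (c : 'I_N -> F),
    forall x : F, l x = \sum_(i < N) c i * x ^+ (p ^ i)%N.

Definition affine (p : nat) (F : finFieldType) (l : F -> F) : Prop :=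
  exists (c0 : F) (N : nat) (c : 'I_N -> F),
    forall x : F, l x = c0 + \sum_(i < N) c i * x ^+ (p ^ i)%N.

Definition EA_equiv (p : nat) (F : finFieldType) (f g : F -> F) : Prop :=
  exists l1 l2 l3 : F -> F,
    affine p l1 /\ affine p l2 /\ affine p l3 /\ bijective l1 /\ bijective l2 /\
    (forall x, g x = l1 (f (l2 x)) + l3 x).

Definition lin_equiv (p : nat) (F : finFieldType) (f g : F -> F) : Prop :=
  exists l1 l2 : F -> F,
    [/\ linearized p l1, linearized p l2, bijective l1, bijective l2 &
        forall x, g x = l1 (f (l2 x))].

(* Main.v *)
Require Import Defs.
From HB Require Import structures.
From mathcomp Require Import all_boot all_order all_algebra all_field.
From mathcomp Require Import ring.
Set Implicit Arguments. Unset Strict Implicit. Unset Printing Implicit Defensive.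
Import GRing.Theory.
Local Open Scope ring_scope.

Section S.
Variables (p : nat) (F : finFieldType).
Hypothesis hp : p \in [pchar F].
Hypothesis hodd : odd p.

Lemma pnat_pow i : [pchar F].-nat (p ^ i)%N.
Proof.
rewrite (eq_pnat _ (pcharf_eq hp)) pnatX pnat_id ?orTb //.
exact: pcharf_prime hp.
Qed.

Lemma frobD i (x y : F) : (x + y) ^+ (p ^ i) = x ^+ (p ^ i) + y ^+ (p ^ i).
Proof. exact: exprDn_pchar (pnat_pow i). Qed.

Lemma frobN i (x : F) : (- x) ^+ (p ^ i) = - x ^+ (p ^ i).
Proof. exact: exprNn_pchar (pnat_pow i). Qed.

Lemma lin_add (L : F -> F) : linearized p L -> forall x y, L (x + y) = L x + L y.
Proof.
case=> N [c hc] x y; rewrite !hc -big_split /=; apply: eq_bigr => i _.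
by rewrite frobD mulrDr.
Qed.

Lemma lin_opp (L : F -> F) : linearized p L -> forall x, L (- x) = - L x.
Proof.
case=> N [c hc] x; rewrite !hc -sumrN; apply: eq_bigr => i _.
by rewrite frobN mulrN.
Qed.

Lemma lin0 (L : F -> F) : linearized p L -> L 0 = 0.
Proof. by move=> hL; apply/(addrI (L 0)); rewrite -lin_add // !addr0. Qed.

End S.

Section T.
Variables (p : nat) (F : finFieldType).
Hypothesis hp : p \in [pchar F].
Hypothesis hodd : odd p.

Lemma DO0 (h : F -> F) : DO_fun p h -> h 0 = 0.
Proof.
case=> N [a ha]; rewrite ha big1 // => i _; rewrite big1 // => j _.
rewrite expr0n addn_eq0 !expn_eq0. have p0 : (p == 0%N) = false by case: (p) hodd. by rewrite p0 /= mulr0.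
Qed.

Lemma DO_even (h : F -> F) : DO_fun p h -> forall x, h (- x) = h x.
Proof.
case=> N [a ha] x; rewrite !ha; apply: eq_bigr => i _; apply: eq_bigr => j _.
by rewrite !exprD !(frobN hp) mulrNN.
Qed.

Lemma DO_odd (h : F -> F) : DO_fun p h -> forall c y,
  h (c + - y) - h (- y) - h c = - (h (c + y) - h y - h c).
Proof.
case=> N [a ha] c y; rewrite !ha -!sumrB -sumrN; apply: eq_bigr => i _.
rewrite -!sumrB -sumrN; apply: eq_bigr => j _.
rewrite !exprD !(frobD hp) !(frobN hp); ring.
Qed.

Lemma two_neq0 : (2%:R : F) != 0.
Proof.
rewrite -(dvdn_pcharf hp); apply/negP => /(dvdn_leq (isT : (0 < 2)%N)) h2.
have p2 : p = 2%N by apply/eqP; rewrite eqn_leq h2 prime_gt1 // (pcharf_prime hp).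
by move: hodd; rewrite p2.
Qed.

Lemma cancel2 (x y : F) : x *+ 2 = y *+ 2 -> x = y.
Proof. by rewrite -[x *+ 2]mulr_natr -[y *+ 2]mulr_natr => /(mulIf two_neq0). Qed.

End T.

Lemma bij_shift (F : finFieldType) (l L : F -> F) c :
  bijective l -> (forall x, l x = c + L x) -> bijective L.
Proof.
case=> m lm ml hl; apply: (@Bijective _ _ _ (fun y => m (y + c))).
  by move=> x /=; rewrite -{2}(lm x) hl addrC.
by move=> y; apply: (addrI c); rewrite -hl ml addrC.
Qed.

Theorem lemma1 (p n : nat) (F : finFieldType) (f g : F -> F) :
  prime p -> odd p -> (0 < n)%N -> #|F| = (p ^ n)%N ->
  DO_fun p f -> planar f -> DO_fun p g -> planar g ->
  (EA_equiv p f g <-> lin_equiv p f g).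
Proof.
move=> pp op _ cardF hf _ hg' _.
have hp : p \in [pchar F] by apply: (card_finPcharP cardF).
split.
- case=> l1 [l2 [l3 [[c1 [N1 [k1 h1]]] [[c2 [N2 [k2 h2]]] [[c3 [N3 [k3 h3]]] [b1 [b2 hg]]]]]]].
  pose L1 := fun x : F => \sum_(i < N1) k1 i * x ^+ (p ^ i)%N.
  pose L2 := fun x : F => \sum_(i < N2) k2 i * x ^+ (p ^ i)%N.
  pose L3 := fun x : F => \sum_(i < N3) k3 i * x ^+ (p ^ i)%N.
  have lL1 : linearized p L1 by exists N1, k1.
  have lL2 : linearized p L2 by exists N2, k2.
  have lL3 : linearized p L3 by exists N3, k3.
  have {}h1 : forall x, l1 x = c1 + L1 x by exact: h1.
  have {}h2 : forall x, l2 x = c2 + L2 x by exact: h2.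
  have {}h3 : forall x, l3 x = c3 + L3 x by exact: h3.
  exists L1, L2; split => //.
  + exact: bij_shift b1 h1.
  + exact: bij_shift b2 h2.
  move=> x.
  have g0 := hg 0; rewrite (DO0 op hg') h2 h1 h3 (lin0 hp lL2) (lin0 hp lL3) addr0 addr0 in g0.
  have gx := hg x; rewrite h2 h1 h3 in gx.
  have gmx := hg (- x); rewrite h2 h1 h3 (lin_opp hp lL2) (lin_opp hp lL3) (DO_even hp hg') in gmx.
  have hD := DO_odd hp hf c2 (L2 x).
  rewrite (DO_even hp hf) in hD.
  set a := f (c2 + L2 x) in hD gx; set b := f (c2 + - L2 x) in hD gmx.
  set u := f (L2 x) in hD *; set w := f c2 in hD g0.
  have hab : a + b = w *+ 2 + u *+ 2.
    have eb : b = - (a - u - w) + u + w by rewrite -hD; ring.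
    by rewrite eb; ring.
  have : L1 (a + b) = L1 ((w + w) + (u + u)) by rewrite hab !mulr2n.
  rewrite (lin_add hp lL1 a b) (lin_add hp lL1 (w + w) (u + u)) (lin_add hp lL1 w w) (lin_add hp lL1 u u) => hL.
  apply: (cancel2 hp op); rewrite !mulr2n {1}gx gmx.
  transitivity ((L1 a + L1 b) + (c1 + L1 w + c3) *+ 2 - (L1 w + L1 w)); first ring.
  by rewrite hL -g0; ring.
- case=> l1 [l2 [[N1 [k1 h1]] [N2 [k2 h2]] b1 b2 hg]].
  exists l1, l2, (fun _ => 0); split; [|split; [|split; [|split; [|split]]]] => //.
  + by exists 0, N1, k1 => x; rewrite add0r.
  + by exists 0, N2, k2 => x; rewrite add0r.
  + by exists 0, 0%N, (fun _ => 0) => x; rewrite big_ord0 addr0.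
  + by move=> x; rewrite hg addr0.
Qed.
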